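(* Assume the setting in the context with Assumptions (A1), (A2), (A3). For any $z\in\mathcal X$, $\min_{x\in X}\max_{y\in\mathcal Y}\hat f_r(x,y;z)=\max_{y\in\mathcal Y}\min_{x\in X}\hat f_r(x,y;z)$; hence $P(z)=\min_{x\in X}\Phi(x;z)=\max_{y\in\mathcal Y}\Psi_r(y;z)$.
   Context: $\mathcal X=\mathbb R^{d_1\times r}$ (Frobenius norm), $\mathcal Y=\mathbb R^{d_2}$, $\mathcal M=\{x:x^\top x=I_r\}$, $c(x)=x^\top x-I_r$, $A(x)=x(\frac32I_r-\frac12x^\top x)$; $C>\frac12+\sup_{x\in\mathcal M}\|x\|$, $X=\{x:\|x\|\le C\}$, $\bar X=\{A(x):\|x\|\le C\}$. $\partial$ is the Fréchet subdifferential. (A1) $h:\mathcal Y\to\mathbb R\cup\{+\infty\}$ proper, closed, $\zeta$-weakly convex ($h+\frac\zeta2\|\cdot\|^2$ convex), closed domain $Y$, locally Lipschitz on $Y$, $Y$ bounded. (A2) $f$ differentiable on an open set containing $\bar X\times Y$ with $\|\nabla_xf(x_1,y_1)-\nabla_xf(x_2,y_2)\|\le L_{xx}\|x_1-x_2\|+L_{xy}\|y_1-y_2\|$, $\|\nabla_yf(x_1,y_1)-\nabla_yf(x_2,y_2)\|\le L_{yx}\|x_1-x_2\|+L_{yy}\|y_1-y_2\|$ on $\bar X\times Y$. (A3) With $f_r=f-h$, there is $\mu>0$ with $\max_wf_r(x,w)-f_r(x,y)\le\frac1{2\mu}\mathrm{dist}^2(0,-\nabla_yf(x,y)+\partial h(y))$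 for all $x\in\bar X,y\in Y$. For $\rho>0$: $\tilde f(x,y)=f(A(x),y)+\frac\rho4\|c(x)\|^2$, $\tilde f_r=\tilde f-h$; $l$ is the (blockwise) Lipschitz constant of $\nabla\tilde f$ on $X\times Y$; standing choice $p>l$. For $x\in X,y\in Y,z\in\mathcal X$: $\hat f(x,y;z)=\tilde f(x,y)+\frac p2\|x-z\|^2$, $\hat f_r=\hat f-h$, $\Phi(x;z)=\max_{y\in\mathcal Y}\hat f_r(x,y;z)$, $\Psi_r(y;z)=\min_{x\in X}\hat f(x,y;z)-h(y)$, $P(z)=\min_{x\in X}\max_{y\in\mathcal Y}\hat f_r(x,y;z)$. *)

(* Defs.v *)
From HB Require Import structures.
From mathcomp Require Import all_boot all_order all_algebra.
From mathcomp Require Import classical_sets boolp reals constructive_ereal ereal.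
Set Implicit Arguments. Unset Strict Implicit. Unset Printing Implicit Defensive.
Import Order.TTheory GRing.Theory Num.Theory.
Local Open Scope ring_scope.
Local Open Scope classical_set_scope.

Section Defs.
Variable R : realType.

(* Frobenius inner product and norm on m x n matrices (row vectors of
   length d are 1 x d matrices, for which this is the Euclidean norm). *)
Definition fro_dot {m n} (A B : 'M[R]_(m, n)) : R :=
  \sum_(i < m) \sum_(j < n) A i j * B i j.
Definition fro_norm {m n} (A : 'M[R]_(m, n)) : R := Num.sqrt (fro_dot A A).

Definition is_grad {m n k} (F : 'M[R]_(m, n) -> 'rV[R]_k -> R)
  (gx : 'M[R]_(m, n)) (gy : 'rV[R]_k) (x : 'M[R]_(m, n)) (y : 'rV[R]_k) :=
  forall eps : R, 0 < eps -> exists2 delta : R, 0 < delta &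
    forall u v, fro_norm u + fro_norm v < delta ->
      `| F (x + u) (y + v) - F x y - fro_dot gx u - fro_dot gy v |
        <= eps * (fro_norm u + fro_norm v).

Definition open_pair {m n k} (U : set ('M[R]_(m, n) * 'rV[R]_k)) :=
  forall x y, U (x, y) -> exists2 eps : R, 0 < eps &
    forall x' y', fro_norm (x' - x) + fro_norm (y' - y) < eps -> U (x', y').

Definition closed_set {k} (S : set 'rV[R]_k) :=
  forall y, (forall eps : R, 0 < eps -> exists2 w, S w & fro_norm (w - y) < eps) -> S y.

Definition bounded_set {k} (S : set 'rV[R]_k) :=
  exists M : R, forall y, S y -> fro_norm y <= M.

Definition dom {k} (h : 'rV[R]_k -> \bar R) : set 'rV[R]_k :=
  [set y | (h y < +oo)%E].

Definition proper_fun {k} (h : 'rV[R]_k -> \bar R) :=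
  (forall y, h y != -oo%E) /\ exists y, (h y < +oo)%E.

(* closed = lower semicontinuous *)
Definition lsc {k} (h : 'rV[R]_k -> \bar R) :=
  forall y (a : \bar R), (a < h y)%E -> exists2 delta : R, 0 < delta &
    forall w, fro_norm (w - y) < delta -> (a < h w)%E.

Definition convex_fun {k} (g : 'rV[R]_k -> \bar R) :=
  forall y1 y2 (t : R), 0 <= t <= 1 ->
    (g (t *: y1 + (1 - t) *: y2)%R <= t%:E * g y1 + (1 - t)%:E * g y2)%E.

Definition weakly_convex {k} (zeta : R) (h : 'rV[R]_k -> \bar R) :=
  convex_fun (fun y => (h y + (zeta / 2 * fro_norm y ^+ 2)%:E)%E).

Definition locally_lipschitz_on {k} (h : 'rV[R]_k -> \bar R) (S : set 'rV[R]_k) :=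
  forall y, S y -> exists2 delta : R, 0 < delta & exists L : R,
    forall w1 w2, S w1 -> S w2 -> fro_norm (w1 - y) < delta ->
      fro_norm (w2 - y) < delta ->
      `| fine (h w1) - fine (h w2) | <= L * fro_norm (w1 - w2).

Definition frechet_subdiff {k} (h : 'rV[R]_k -> \bar R) (y : 'rV[R]_k) :
  set 'rV[R]_k :=
  [set v | h y \is a fin_num /\
    forall eps : R, 0 < eps -> exists2 delta : R, 0 < delta &
      forall w, fro_norm (w - y) < delta ->
        ((fine (h y) + fro_dot v (w - y) - eps * fro_norm (w - y))%:E <= h w)%E].

Definition cmap {d1 r} (x : 'M[R]_(d1, r)) : 'M[R]_r := x^T *m x - 1%:M.
Definition Amap {d1 r} (x : 'M[R]_(d1, r)) : 'M[R]_(d1, r) :=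
  x *m ((3 / 2 : R)%:M - (1 / 2 : R) *: (x^T *m x)).

Definition Xset {d1 r} (C : R) : set 'M[R]_(d1, r) := [set x | fro_norm x <= C].
Definition Xbar {d1 r} (C : R) : set 'M[R]_(d1, r) := Amap @` Xset C.

Definition ftilde {d1 r d2} (f : 'M[R]_(d1, r) -> 'rV[R]_d2 -> R) (rho : R)
  (x : 'M[R]_(d1, r)) (y : 'rV[R]_d2) : R :=
  f (Amap x) y + rho / 4 * fro_norm (cmap x) ^+ 2.

Definition fhat {d1 r d2} (f : 'M[R]_(d1, r) -> 'rV[R]_d2 -> R) (rho p : R)
  (x : 'M[R]_(d1, r)) (y : 'rV[R]_d2) (z : 'M[R]_(d1, r)) : R :=
  ftilde f rho x y + p / 2 * fro_norm (x - z) ^+ 2.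

Definition fhat_r {d1 r d2} (f : 'M[R]_(d1, r) -> 'rV[R]_d2 -> R)
  (h : 'rV[R]_d2 -> \bar R) (rho p : R) x y z : \bar R :=
  ((fhat f rho p x y z)%:E - h y)%E.

Definition Phi {d1 r d2} (f : 'M[R]_(d1, r) -> 'rV[R]_d2 -> R)
  (h : 'rV[R]_d2 -> \bar R) (rho p : R) x z : \bar R :=
  ereal_sup [set fhat_r f h rho p x y z | y in [set: 'rV[R]_d2]].

Definition Psi_r {d1 r d2} (f : 'M[R]_(d1, r) -> 'rV[R]_d2 -> R)
  (h : 'rV[R]_d2 -> \bar R) (rho p C : R) y z : \bar R :=
  (ereal_inf [set (fhat f rho p x y z)%:E | x in @Xset d1 r C] - h y)%E.

Definition min_attained {T} (S : set T) (F : T -> \bar R) :=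
  exists2 x, S x & F x = ereal_inf (F @` S).
Definition max_attained {T} (S : set T) (F : T -> \bar R) :=
  exists2 x, S x & F x = ereal_sup (F @` S).

End Defs.

(* Main.v *)
Require Import Defs.
From HB Require Import structures.
From mathcomp Require Import all_boot all_order all_algebra.
From mathcomp Require Import classical_sets boolp reals constructive_ereal ereal.
From mathcomp Require Import topology normedtype.
From mathcomp Require Import ring lra.
Import Order.TTheory GRing.Theory Num.Theory.
Import numFieldNormedType.Exports.
Local Open Scope ring_scope.
Local Open Scope classical_set_scope.
Set Implicit Arguments. Unset Strict Implicit. Unset Printing Implicit Defensive.
Lemma mulss_ge0 (R : realType) (x : R) : 0 <= x * x.
Proof. by rewrite -expr2 sqr_ge0. Qed.

Lemma fro_dotC (R : realType) m n (A B : 'M[R]_(m, n)) : fro_dot A B = fro_dot B A.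
Proof. by apply: eq_bigr => i _; apply: eq_bigr => j _; rewrite mulrC. Qed.

Lemma fro_dotDl (R : realType) m n (A B D : 'M[R]_(m, n)) :
  fro_dot (A + B) D = fro_dot A D + fro_dot B D.
Proof.
rewrite /fro_dot -big_split /=; apply: eq_bigr => i _.
by rewrite -big_split /=; apply: eq_bigr => j _; rewrite mxE mulrDl.
Qed.

Lemma fro_dotZl (R : realType) m n (a : R) (A D : 'M[R]_(m, n)) :
  fro_dot (a *: A) D = a * fro_dot A D.
Proof.
rewrite /fro_dot mulr_sumr; apply: eq_bigr => i _.
by rewrite mulr_sumr; apply: eq_bigr => j _; rewrite mxE mulrA.
Qed.

Lemma fro_dotNl (R : realType) m n (A D : 'M[R]_(m, n)) :
  fro_dot (- A) D = - fro_dot A D.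
Proof. by rewrite -scaleN1r fro_dotZl mulN1r. Qed.

Lemma fro_dotBl (R : realType) m n (A B D : 'M[R]_(m, n)) :
  fro_dot (A - B) D = fro_dot A D - fro_dot B D.
Proof. by rewrite fro_dotDl fro_dotNl. Qed.

Lemma fro_dotDr (R : realType) m n (A B D : 'M[R]_(m, n)) :
  fro_dot D (A + B) = fro_dot D A + fro_dot D B.
Proof. by rewrite !(fro_dotC D) fro_dotDl. Qed.

Lemma fro_dotZr (R : realType) m n (a : R) (A D : 'M[R]_(m, n)) :
  fro_dot D (a *: A) = a * fro_dot D A.
Proof. by rewrite !(fro_dotC D) fro_dotZl. Qed.

Lemma fro_dotNr (R : realType) m n (A D : 'M[R]_(m, n)) :
  fro_dot D (- A) = - fro_dot D A.
Proof. by rewrite !(fro_dotC D) fro_dotNl. Qed.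

Lemma fro_dotBr (R : realType) m n (A B D : 'M[R]_(m, n)) :
  fro_dot D (A - B) = fro_dot D A - fro_dot D B.
Proof. by rewrite fro_dotDr fro_dotNr. Qed.

Lemma fro_dot0l (R : realType) m n (D : 'M[R]_(m, n)) : fro_dot 0 D = 0.
Proof. by rewrite -(scale0r (0 : 'M[R]_(m,n))) fro_dotZl mul0r. Qed.

Lemma fro_dot0r (R : realType) m n (D : 'M[R]_(m, n)) : fro_dot D 0 = 0.
Proof. by rewrite fro_dotC fro_dot0l. Qed.

Lemma fro_dot_ge0 (R : realType) m n (A : 'M[R]_(m, n)) : 0 <= fro_dot A A.
Proof. by apply: sumr_ge0 => i _; apply: sumr_ge0 => j _; exact: mulss_ge0. Qed.

Lemma fro_norm_ge0 (R : realType) m n (A : 'M[R]_(m, n)) : 0 <= fro_norm A.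
Proof. exact: sqrtr_ge0. Qed.

Lemma fro_normE2 (R : realType) m n (A : 'M[R]_(m, n)) :
  fro_norm A ^+ 2 = fro_dot A A.
Proof. by rewrite sqr_sqrtr // fro_dot_ge0. Qed.

Lemma fro_dot_eq0 (R : realType) m n (A : 'M[R]_(m, n)) :
  fro_dot A A = 0 -> A = 0.
Proof.
move=> H; apply/matrixP => i j; rewrite mxE.
have H1 := @psumr_eq0P _ _ xpredT (fun i => \sum_j A i j * A i j)
  (fun i _ => sumr_ge0 _ (fun j _ => mulss_ge0 (A i j))) H i isT.
have H2 := @psumr_eq0P _ _ xpredT (fun j => A i j * A i j)
  (fun j _ => mulss_ge0 (A i j)) H1 j isT.
by move/eqP: H2; rewrite mulf_eq0 orbb => /eqP.
Qed.

Lemma fro_norm_eq0 (R : realType) m n (A : 'M[R]_(m, n)) :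
  fro_norm A = 0 -> A = 0.
Proof. by move=> H; apply: fro_dot_eq0; rewrite -fro_normE2 H expr0n. Qed.

Lemma fro_norm0 (R : realType) m n : fro_norm (0 : 'M[R]_(m, n)) = 0.
Proof. by rewrite /fro_norm fro_dot0l sqrtr0. Qed.

Lemma fro_normZ (R : realType) m n (a : R) (A : 'M[R]_(m, n)) :
  fro_norm (a *: A) = `|a| * fro_norm A.
Proof.
rewrite /fro_norm fro_dotZl fro_dotZr mulrA -expr2 sqrtrM ?sqrtr_sqr //.
exact: sqr_ge0.
Qed.

Lemma fro_normN (R : realType) m n (A : 'M[R]_(m, n)) :
  fro_norm (- A) = fro_norm A.
Proof. by rewrite -scaleN1r fro_normZ normrN normr1 mul1r. Qed.

Lemma fro_normB (R : realType) m n (A B : 'M[R]_(m, n)) :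
  fro_norm (A - B) = fro_norm (B - A).
Proof. by rewrite -fro_normN opprB. Qed.

Lemma fro_CS2 (R : realType) m n (A B : 'M[R]_(m, n)) :
  fro_dot A B ^+ 2 <= fro_dot A A * fro_dot B B.
Proof.
have [A0|Ane] := eqVneq (fro_dot A A) 0.
  by rewrite A0 (fro_dot_eq0 A0) fro_dot0l expr0n /= mul0r.
have Apos : 0 < fro_dot A A by rewrite lt_def Ane fro_dot_ge0.
set t := - (fro_dot A B / fro_dot A A).
have := fro_dot_ge0 (t *: A + B).
rewrite !fro_dotDl !fro_dotDr !fro_dotZl !fro_dotZr (fro_dotC B A) /t.
set a := fro_dot A A; set b := fro_dot A B; set c := fro_dot B B => H.
have -> : b ^+ 2 = a * (b ^+ 2 / a) by field; rewrite /a; lra.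
rewrite ler_pM2l //. 
have E : - (b / a) * (- (b / a) * a) + - (b / a) * b + (- (b / a) * b + c) = c - b^+2/a.
  by field; rewrite /a; lra.
by rewrite E subr_ge0 in H.
Qed.

Lemma fro_CS (R : realType) m n (A B : 'M[R]_(m, n)) :
  `|fro_dot A B| <= fro_norm A * fro_norm B.
Proof.
rewrite -sqrtr_sqr /fro_norm -sqrtrM ?fro_dot_ge0 //.
by apply: ler_wsqrtr; exact: fro_CS2.
Qed.

Lemma fro_CS' (R : realType) m n (A B : 'M[R]_(m, n)) :
  fro_dot A B <= fro_norm A * fro_norm B.
Proof. exact: le_trans (ler_norm _) (fro_CS _ _). Qed.

Lemma fro_normD (R : realType) m n (A B : 'M[R]_(m, n)) :
  fro_norm (A + B) <= fro_norm A + fro_norm B.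
Proof.
rewrite -(ler_pXn2r (n:=2)) ?nnegrE ?addr_ge0 ?fro_norm_ge0 //.
rewrite fro_normE2 fro_dotDl !fro_dotDr (fro_dotC B A) sqrrD !fro_normE2.
have := fro_CS' A B; lra.
Qed.

Lemma fro_normDB (R : realType) m n (A B : 'M[R]_(m, n)) :
  fro_norm A <= fro_norm B + fro_norm (A - B).
Proof. by have := fro_normD B (A - B); rewrite addrC subrK. Qed.

Lemma fro_norm_sq_expand (R : realType) m n (A B : 'M[R]_(m, n)) :
  fro_norm (A + B) ^+ 2 = fro_norm A ^+ 2 + 2 * fro_dot A B + fro_norm B ^+ 2.
Proof.
rewrite !fro_normE2 fro_dotDl !fro_dotDr (fro_dotC B A); ring.
Qed.

Lemma fro_entry_le (R : realType) m n (A : 'M[R]_(m, n)) i j :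
  `|A i j| <= fro_norm A.
Proof.
rewrite -sqrtr_sqr /fro_norm; apply: ler_wsqrtr.
rewrite /fro_dot (bigD1 i) //= (bigD1 j) //= expr2 -addrA lerDl.
apply: addr_ge0; first by apply: sumr_ge0 => k _; exact: mulss_ge0.
by apply: sumr_ge0 => k _; apply: sumr_ge0 => l _; exact: mulss_ge0.
Qed.

Lemma fro_le_entries (R : realType) m n (A : 'M[R]_(m, n)) (e : R) :
  0 <= e -> (forall i j, `|A i j| <= e) -> fro_norm A <= (m * n)%:R * e.
Proof.
move=> e0 H.
have Hs : fro_dot A A <= \sum_(i < m) \sum_(j < n) e ^+ 2.
  apply: ler_sum => i _; apply: ler_sum => j _.
  by rewrite -expr2 -real_normK ?num_real // lerXn2r ?nnegrE // normr_ge0.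
rewrite !sumr_const !card_ord -mulrnA -mulr_natl mulnC in Hs.
set k := (m * n)%:R : R in Hs *.
have [mn0|mnpos] := eqVneq (m * n)%N 0%N.
  rewrite /k mn0 mul0r in Hs.
  have Hd : fro_dot A A = 0 by apply/eqP; rewrite eq_le Hs fro_dot_ge0.
  by rewrite /fro_norm Hd sqrtr0 /k mn0 mul0r.
have h1 : (1 <= k) by rewrite ler1n lt0n.
rewrite /fro_norm; apply: le_trans (ler_wsqrtr Hs) _.
have h2 : k * e ^+ 2 <= (k * e) ^+ 2.
  by rewrite exprMn ler_wpM2r ?sqr_ge0 // expr2 ler_peMl //; lra.
apply: le_trans (ler_wsqrtr h2) _.
by rewrite sqrtr_sqr ger0_norm // mulr_ge0 //; lra.
Qed.
Definition hasder (R : realType) (phi : R -> R) (d t : R) :=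
  forall eps, 0 < eps -> exists2 del, 0 < del &
    forall s, `|s| < del -> `|phi (t + s) - phi t - s * d| <= eps * `|s|.

Lemma mono_le0 (R : realType) (phi phi' : R -> R) (a b : R) :
  a <= b -> (forall t, a <= t <= b -> hasder phi (phi' t) t) ->
  (forall t, a <= t <= b -> phi' t <= 0) -> phi b <= phi a.
Proof.
move=> ab Hd Hn.
suff H : forall eps, 0 < eps -> phi b <= phi a + eps * (b - a).
  apply/ler_addgt0Pr => e e0.
  have ab' : 0 <= b - a by rewrite subr_ge0.
  have := H (e / (b - a + 1)) (divr_gt0 e0 (ltr_wpDl ab' ltr01)).
  move=> Hb; apply: le_trans Hb _; rewrite lerD2l.
  rewrite mulrAC ler_pdivrMr ?ltr_wpDl ?subr_ge0 //; nra.
move=> eps eps0.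
pose A := [set t | a <= t <= b /\ phi t <= phi a + eps * (t - a)].
have Aa : A a by split; [rewrite lexx ab | rewrite subrr mulr0 addr0].
have Aub : ubound A b by move=> t [/andP[]].
have hs : has_sup A by split; [exists a | exists b].
set s := sup A.
have as_ : a <= s by exact: ub_le_sup hs.2 _ Aa.
have sb : s <= b by apply: ge_sup => //; exists a.
have sab : a <= s <= b by rewrite as_ sb.
have [del del0 Hdel] := Hd s sab eps eps0.
have Hs : phi s <= phi a + eps * (s - a).
  have [t At lt] := sup_adherent del0 hs.
  have ts : t <= s by exact: ub_le_sup hs.2 _ At.
  have := Hdel (t - s); rewrite [s + (t - s)]addrC subrK.
  have nr : `|t - s| = s - t by rewrite ler0_norm ?opprB // subr_le0.
  rewrite nr => /(_ _)/wrap[]; first by rewrite /s; lra.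
  rewrite ler_norml => /andP[h1 h2].
  have h3 : 0 <= (t - s) * phi' s by apply: mulr_le0; [rewrite subr_le0|exact: Hn].
  case: At => _ h4.
  have : eps * (s - t) + eps * (t - a) = eps * (s - a) by ring.
  lra.
have sEb : s = b.
  apply/eqP; rewrite eq_le sb /=; rewrite leNgt; apply/negP => ltsb.
  pose r := Num.min (del / 2) (b - s).
  have r0 : 0 < r by rewrite lt_min divr_gt0 // subr_gt0.
  have rd : r < del by rewrite gt_min ltr_pdivrMr //; apply/orP; left; lra.
  have rb : r <= b - s by rewrite ge_min lexx orbT.
  have : A (s + r).
    split; first by apply/andP; split; lra.
    have := Hdel r; rewrite gtr0_norm // => /(_ rd); rewrite ler_norml => /andP[_ h2].
    have h3 : r * phi' s <= 0 by apply: mulr_ge0_le0; [exact: ltW|exact: Hn].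
    have : eps * (s - a) + eps * r = eps * (s + r - a) by ring.
    lra.
  move=> /(ub_le_sup hs.2); rewrite -/s; lra.
by rewrite -sEb.
Qed.

Lemma hasder_comb (R : realType) (phi : R -> R) (d t c al be : R) :
  hasder phi d t ->
  hasder (fun u => c * phi u + al * u + be * u ^+ 2) (c * d + al + 2 * be * t) t.
Proof.
move=> H eps eps0.
have c1 : 0 < `|c| + 1 by rewrite ltr_wpDl.
have b1 : 0 < `|be| + 1 by rewrite ltr_wpDl.
have [del del0 Hd] := H (eps / 2 / (`|c| + 1)) (divr_gt0 (divr_gt0 eps0 (ltr0n _ 2)) c1).
exists (Num.min del (eps / 2 / (`|be| + 1))).
  by rewrite lt_min del0 divr_gt0 // divr_gt0.
move=> s; rewrite lt_min => /andP[sd se].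
have E : c * phi (t + s) + al * (t + s) + be * (t + s) ^+ 2 -
    (c * phi t + al * t + be * t ^+ 2) - s * (c * d + al + 2 * be * t)
    = c * (phi (t + s) - phi t - s * d) + be * s ^+ 2 by ring.
rewrite E; apply: le_trans (ler_normD _ _) _.
rewrite !normrM.
have h1 := Hd s sd.
set q := eps / 2 / (`|c| + 1) in h1.
have hq : (`|c| + 1) * q = eps / 2 by rewrite /q mulrC divfK // gt_eqF.
have q0 : 0 <= q by rewrite /q ltW // divr_gt0 // divr_gt0.
have h2 : `|c| * `|phi (t + s) - phi t - s * d| <= `|c| * (q * `|s|).
  by rewrite ler_wpM2l.
have h3 : `|c| * (q * `|s|) <= eps / 2 * `|s|.
  by rewrite mulrA -hq mulrDl mulrDl mul1r lerDl mulr_ge0.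
have h4 : `|be| * (`|s| * `|s|) <= eps / 2 * `|s|.
  move: se; rewrite ltr_pdivlMr // => se.
  have h5 : `|be| * `|s| <= `|s| * (`|be| + 1) by rewrite mulrDr mulr1 mulrC lerDl.
  have s0 := normr_ge0 s.
  rewrite mulrA; nra.
lra.
Qed.

Lemma taylor1 (R : realType) (phi phi' : R -> R) (T K : R) : 0 <= T ->
  (forall t, 0 <= t <= T -> hasder phi (phi' t) t) ->
  (forall t, 0 <= t <= T -> `|phi' t - phi' 0| <= K * t) ->
  `|phi T - phi 0 - T * phi' 0| <= K * T ^+ 2 / 2.
Proof.
move=> T0 Hd HK.
have gen : forall c : R, (c = 1 \/ c = -1) ->
    c * (phi T - phi 0 - T * phi' 0) <= K * T ^+ 2 / 2.
  move=> c hc.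
  pose psi := fun u => c * phi u + (- (c * phi' 0)) * u + (- (K / 2)) * u ^+ 2.
  pose psi' := fun t => c * phi' t + (- (c * phi' 0)) + 2 * (- (K / 2)) * t.
  have Hd' : forall t, 0 <= t <= T -> hasder psi (psi' t) t.
    by move=> t tT; apply: hasder_comb; exact: Hd.
  have Hn' : forall t, 0 <= t <= T -> psi' t <= 0.
    move=> t tT; have := HK t tT; rewrite ler_norml => /andP[h1 h2].
    rewrite /psi'.
    have -> : c * phi' t + - (c * phi' 0) + 2 * - (K / 2) * t
      = c * (phi' t - phi' 0) - K * t by field.
    by case: hc => ->; lra.
  have := mono_le0 T0 Hd' Hn'.
  rewrite /psi expr0n /= !mulr0 !addr0.
  have -> : K * T ^+ 2 / 2 = (K / 2) * T ^+ 2 by ring.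
  have -> : c * (phi T - phi 0 - T * phi' 0) = c * phi T - c * phi' 0 * T - c * phi 0 by ring.
  lra.
have := gen 1 (or_introl erefl); have := gen (-1) (or_intror erefl).
by rewrite ler_norml; lra.
Qed.
Lemma EVT_max (R : realType) (T : pseudoMetricType R) (K : set T) (phi : T -> R) :
  compact K -> K !=set0 ->
  (forall y, K y -> forall e, 0 < e -> exists2 del, 0 < del &
     forall w, K w -> ball y del w -> phi w < phi y + e) ->
  exists2 y0, K y0 & forall y, K y -> phi y <= phi y0.
Proof.
move=> cK [y0 Ky0] usc.
pose D := [set c : R | exists2 w, K w & c < phi w].
pose B := fun c => [set w | K w /\ c < phi w].
have FF : Filter (filter_from D B).
  apply: filter_from_filter.
    by exists (phi y0 - 1); exists y0 => //; lra.
  move=> i j Di Dj; have [ij|ij] := leP i j.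
    by exists j => // w [Kw jw]; split; split => //; lra.
  by exists i => // w [Kw iw]; split; split => //; lra.
have PF : ProperFilter (filter_from D B).
  by apply: filter_from_proper => // c [w Kw cw]; exists w.
have FK : filter_from D B K.
  by exists (phi y0 - 1); [exists y0 => //; lra | move=> w []].
have [x [Kx clx]] := cK _ PF FK.
exists x => // y Ky; rewrite leNgt; apply/negP => lt.
pose c := (phi x + phi y) / 2.
have ce : 0 < c - phi x by rewrite /c; lra.
have [del del0 Hd] := usc x Kx (c - phi x) ce.
have FB : filter_from D B (B c).
  by exists c => //; exists y => //; rewrite /c; lra.
have [w [[Kw cw] bw]] := clx _ _ FB (nbhsx_ballx x del del0).
have := Hd w Kw bw; lra.
Qed.
Lemma vec_mx_entry (R : realType) m n (v : 'rV[R]_(m * n)) i j :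
  vec_mx v i j = v 0 (mxvec_index i j).
Proof. by rewrite -{2}(vec_mxK v) mxvecE. Qed.

Lemma ball_entry (R : realType) k (v u : 'rV[R]_k) (d : R) :
  ball v d u -> forall j, `|v 0 j - u 0 j| < d.
Proof.
rewrite mx_norm_ball /ball_ => H j; apply: le_lt_trans H.
rewrite /Num.norm /= mx_normrE.
have := @le_bigmax _ _ _ 0 (fun ij : 'I_1 * 'I_k => `|(v - u) ij.1 ij.2|) (0, j).
by rewrite /= !mxE.
Qed.

Lemma ball_gt0' (R : realType) k (v u : 'rV[R]_k) (d : R) : ball v d u -> 0 < d.
Proof. rewrite mx_norm_ball /ball_; exact: le_lt_trans (normr_ge0 _). Qed.

Lemma fro_vec_bound (R : realType) m n (v u : 'rV[R]_(m * n)) (d : R) :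
  ball v d u -> fro_norm (vec_mx u - vec_mx v) <= (m * n)%:R * d.
Proof.
move=> b; have d0 := ball_gt0' b.
apply: fro_le_entries; first exact: ltW.
by move=> i j; rewrite !mxE distrC; apply: ltW; exact: ball_entry.
Qed.

Lemma lt_frac (R : realType) (N eps : R) : 0 <= N -> 0 < eps -> N * (eps / (N + 1)) < eps.
Proof.
move=> N0 e0; have N1 : 0 < N + 1 by lra.
rewrite mulrA ltr_pdivrMr //; nra.
Qed.

Lemma EVT_M_max (R : realType) m n (K : set 'M[R]_(m, n)) (phi : 'M[R]_(m, n) -> R) (Mb : R) :
  (forall x, K x -> fro_norm x <= Mb) ->
  (forall y, (forall eps, 0 < eps -> exists2 w, K w & fro_norm (w - y) < eps) -> K y) ->
  K !=set0 ->
  (forall y, K y -> forall e, 0 < e -> exists2 del, 0 < del &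
     forall w, K w -> fro_norm (w - y) < del -> phi w < phi y + e) ->
  exists2 y0, K y0 & forall y, K y -> phi y <= phi y0.
Proof.
move=> Kb Kc [x0 Kx0] usc.
pose K' := [set v : 'rV[R]_(m * n) | K (vec_mx v)].
pose N := (m * n)%:R : R.
have N0 : 0 <= N by rewrite /N ler0n.
have N1 : 0 < N + 1 by lra.
have Mb0 : 0 <= Mb := le_trans (fro_norm_ge0 x0) (Kb _ Kx0).
have cK' : compact K'.
  apply: bounded_closed_compact.
  - exists Mb; split; first exact: num_real.
    move=> M hM v Kv /=.
    rewrite /Num.norm /= mx_normrE; apply: bigmax_le; first lra.
    move=> [i k] _ /=; rewrite (ord1 i); case: (mxvec_indexP k) => a b.
    rewrite -vec_mx_entry; apply: le_trans (fro_entry_le _ a b) _.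
    by apply: le_trans (Kb _ Kv) _; apply: ltW.
  - move=> v hv; apply: Kc => eps eps0.
    have d0 : 0 < eps / (N + 1) by rewrite divr_gt0.
    have [u [Ku bu]] := hv _ (nbhsx_ballx v _ d0).
    exists (vec_mx u) => //.
    apply: le_lt_trans (fro_vec_bound bu) _; exact: lt_frac.
have K'0 : K' (mxvec x0) by rewrite /K' /= mxvecK.
have usc' : forall y, K' y -> forall e, 0 < e -> exists2 del, 0 < del &
     forall w, K' w -> ball y del w -> phi (vec_mx w) < phi (vec_mx y) + e.
  move=> y Ky e e0; have [del del0 Hd] := usc _ Ky e e0.
  exists (del / (N + 1)); first by rewrite divr_gt0.
  move=> w Kw bw; apply: Hd Kw _.
  apply: le_lt_trans (fro_vec_bound bw) _; exact: lt_frac.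
have [v0 Kv0 Hv0] := EVT_max cK' (ex_intro _ _ K'0) usc'.
exists (vec_mx v0) => // y Ky; have := Hv0 (mxvec y); rewrite /K' /= mxvecK; exact.
Qed.

Lemma EVT_M_min (R : realType) m n (K : set 'M[R]_(m, n)) (phi : 'M[R]_(m, n) -> R) (Mb : R) :
  (forall x, K x -> fro_norm x <= Mb) ->
  (forall y, (forall eps, 0 < eps -> exists2 w, K w & fro_norm (w - y) < eps) -> K y) ->
  K !=set0 ->
  (forall y, K y -> forall e, 0 < e -> exists2 del, 0 < del &
     forall w, K w -> fro_norm (w - y) < del -> phi y - e < phi w) ->
  exists2 y0, K y0 & forall y, K y -> phi y0 <= phi y.
Proof.
move=> Kb Kc Kn lsc.
have usc : forall y, K y -> forall e, 0 < e -> exists2 del, 0 < del &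
     forall w, K w -> fro_norm (w - y) < del -> - phi w < - phi y + e.
  move=> y Ky e e0; have [del del0 Hd] := lsc y Ky e e0.
  by exists del => // w Kw hw; have := Hd w Kw hw; lra.
have [y0 Ky0 H] := EVT_M_max Kb Kc Kn usc.
by exists y0 => // y Ky; have := H y Ky; rewrite lerN2.
Qed.
Lemma lmr (R : realType) (x y z : R) : 0 <= z -> x <= y -> x * z <= y * z.
Proof. move=> z0 xy; exact: ler_wpM2r. Qed.
Lemma lml (R : realType) (x y z : R) : 0 <= z -> x <= y -> z * x <= z * y.
Proof. move=> z0 xy; exact: ler_wpM2l. Qed.

Lemma inf_att (R : realType) T (S : set T) (phi : T -> \bar R) x0 :
  S x0 -> (forall x, S x -> (phi x0 <= phi x)%E) -> phi x0 = ereal_inf (phi @` S).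
Proof.
move=> Sx0 H; apply/eqP; rewrite eq_le; apply/andP; split.
  by apply: le_ereal_inf_tmp => _ [x Sx <-]; exact: H.
by apply: ereal_inf_lbound; exists x0.
Qed.

Lemma sup_att (R : realType) T (S : set T) (phi : T -> \bar R) x0 :
  S x0 -> (forall x, S x -> (phi x <= phi x0)%E) -> phi x0 = ereal_sup (phi @` S).
Proof.
move=> Sx0 H; apply/eqP; rewrite eq_le; apply/andP; split.
  by apply: ereal_sup_ubound; exists x0.
by apply: ge_ereal_sup => _ [x Sx <-]; exact: H.
Qed.

Lemma cvx_pt (R : realType) m n (a b : 'M[R]_(m, n)) (t : R) :
  t *: b + (1 - t) *: a = a + t *: (b - a).
Proof. by apply/matrixP => i j; rewrite !mxE; ring. Qed.

Lemma cvx_ball (R : realType) m n (a b : 'M[R]_(m, n)) (t C : R) :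
  fro_norm a <= C -> fro_norm b <= C -> 0 <= t <= 1 ->
  fro_norm (a + t *: (b - a)) <= C.
Proof.
move=> ha hb /andP[t0 t1]; rewrite -cvx_pt.
apply: le_trans (fro_normD _ _) _; rewrite !fro_normZ !ger0_norm //; last lra.
have : t * fro_norm b <= t * C by rewrite ler_wpM2l.
have : (1 - t) * fro_norm a <= (1 - t) * C by rewrite ler_wpM2l //; lra.
lra.
Qed.

Lemma shift_pt (R : realType) m n (a d : 'M[R]_(m, n)) (t s : R) :
  a + (t + s) *: d = (a + t *: d) + s *: d.
Proof. by rewrite scalerDl addrA. Qed.

Lemma DL (R : realType) m n k (F : 'M[R]_(m, n) -> 'rV[R]_k -> R)
  (gx : 'M[R]_(m, n)) (gy : 'rV[R]_k) x0 y0 d e (t : R) :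
  is_grad F gx gy (x0 + t *: d) (y0 + t *: e) ->
  hasder (fun s => F (x0 + s *: d) (y0 + s *: e)) (fro_dot gx d + fro_dot gy e) t.
Proof.
move=> H eps eps0.
set c := fro_norm d + fro_norm e + 1.
have c0 : 0 < c by rewrite /c; have := fro_norm_ge0 d; have := fro_norm_ge0 e; lra.
have [del del0 Hd] := H (eps / c) (divr_gt0 eps0 c0).
exists (del / c); first by rewrite divr_gt0.
move=> s hs; rewrite !shift_pt.
have hu : fro_norm (s *: d) + fro_norm (s *: e) < del.
  rewrite !fro_normZ; move: hs; rewrite ltr_pdivlMr // => hs.
  have : `|s| * (fro_norm d + fro_norm e) <= `|s| * c.
    by apply: lml => //; rewrite /c lerDl.
  lra.
have := Hd _ _ hu; rewrite !fro_dotZr !fro_normZ.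
have -> : F (x0 + t *: d + s *: d) (y0 + t *: e + s *: e) - F (x0 + t *: d) (y0 + t *: e) -
     s * fro_dot gx d - s * fro_dot gy e =
     F (x0 + t *: d + s *: d) (y0 + t *: e + s *: e) - F (x0 + t *: d) (y0 + t *: e) -
     s * (fro_dot gx d + fro_dot gy e) by ring.
move=> h; apply: le_trans h _.
have hq : eps / c * c = eps by rewrite divfK // gt_eqF.
have hc : fro_norm d + fro_norm e <= c by rewrite /c lerDl.
rewrite -mulrDr.
apply: (@le_trans _ _ (eps / c * (`|s| * c))).
  apply: lml; first by rewrite ltW // divr_gt0.
  by apply: lml => //; exact: normr_ge0.
by rewrite (mulrC `|s|) mulrA hq.
Qed.

Lemma grad_unique (R : realType) m n (a : 'M[R]_(m, n)) :
  (forall eps, 0 < eps -> exists2 del, 0 < del &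
     forall v, fro_norm v < del -> `|fro_dot a v| <= eps * fro_norm v) -> a = 0.
Proof.
move=> H; apply: fro_norm_eq0; apply/eqP; rewrite eq_le fro_norm_ge0 andbT.
apply/ler_addgt0Pr => eps eps0; rewrite add0r.
have [del del0 Hd] := H eps eps0.
set na := fro_norm a.
have na0 : 0 <= na := fro_norm_ge0 a.
pose s := del / (2 * (na + 1)).
have s0 : 0 < s by rewrite divr_gt0 //; lra.
have hv : fro_norm (s *: a) < del.
  have hs2 : s * (2 * (na + 1)) = del by rewrite /s divfK // gt_eqF //; lra.
  by rewrite fro_normZ gtr0_norm // -/na -hs2 ltr_pM2l //; lra.
have := Hd _ hv; rewrite fro_dotZr fro_normZ (gtr0_norm s0) -fro_normE2 -/na.
rewrite normrM (gtr0_norm s0) (ger0_norm (sqr_ge0 na)) => h.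
have h2 : na ^+ 2 <= eps * na.
  by rewrite -(ler_pM2l s0); move: h; rewrite [eps * (s * na)]mulrCA.
have [->|napos] := eqVneq na 0; first exact: ltW.
have napos' : 0 < na by rewrite lt_def napos na0.
by move: h2; rewrite expr2 ler_pM2r.
Qed.

Lemma pos_lim (R : realType) (al be : R) :
  (forall T, 0 < T <= 1 -> 0 <= T * al + T ^+ 2 * be) -> 0 <= al.
Proof.
move=> H; rewrite leNgt; apply/negP => al0.
pose T := Num.min 1 (- al / (`|be| + 1)).
have b1 : 0 < `|be| + 1 by rewrite ltr_wpDl.
have T0 : 0 < T by rewrite lt_min ltr01 divr_gt0 //; lra.
have T1 : T <= 1 by rewrite ge_min lexx.
have T2 : T * (`|be| + 1) <= - al.
  by rewrite -ler_pdivlMr // ge_min lexx orbT.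
have := H T; rewrite T0 T1 => /(_ isT).
have : T ^+ 2 * be <= T * (T * `|be|).
  by rewrite expr2 -mulrA; apply: lml; [exact: ltW|]; apply: lml; [exact: ltW| exact: ler_norm].
have : T * (T * `|be|) <= T * (- al - T) by apply: lml; [exact: ltW| lra].
have : 0 < T * T by rewrite mulr_gt0.
nra.
Qed.
Lemma ab_bound (R : realType) (a b c La : R) : 0 < c -> 0 <= La -> 0 <= a -> 0 <= b ->
  c * a ^+ 2 <= La * a * b + La * b ^+ 2 -> a <= (2 * La / c + 1) * b.
Proof.
move=> c0 L0 a0 b0 H.
have hb : 0 <= 2 * La / c * b.
  by apply: mulr_ge0 => //; apply: divr_ge0; [apply: mulr_ge0 | exact: ltW].
have [ab|ba] := leP a b; first by rewrite mulrDl mul1r; lra.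
have h1 : La * b ^+ 2 <= La * a * b.
  by rewrite expr2 mulrA; apply: lmr => //; apply: lml => //; exact: ltW.
have apos : 0 < a by apply: le_lt_trans ba.
have h2 : c * a <= 2 * La * b.
  rewrite -(ler_pM2r apos); rewrite expr2 mulrA in H.
  have : 2 * La * b * a = La * a * b + La * a * b by ring.
  lra.
have h3 : a <= 2 * La / c * b.
  by rewrite mulrAC ler_pdivlMr // mulrC.
rewrite mulrDl mul1r; lra.
Qed.

Lemma Ylem (R : realType) m n k (F : 'M[R]_(m, n) -> 'rV[R]_k -> R)
  (gx : 'M[R]_(m, n) -> 'rV[R]_k -> 'M[R]_(m, n)) (gy : 'M[R]_(m, n) -> 'rV[R]_k -> 'rV[R]_k)
  (Xs : set 'M[R]_(m, n)) (Ys : set 'rV[R]_k) (l : R) :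
  (forall y1 y2 t, Ys y1 -> Ys y2 -> 0 <= t <= 1 -> Ys (y1 + t *: (y2 - y1))) ->
  (forall x y, Xs x -> Ys y -> is_grad F (gx x y) (gy x y) x y) ->
  (forall x1 y1 x2 y2, Xs x1 -> Ys y1 -> Xs x2 -> Ys y2 ->
     fro_norm (gy x1 y1 - gy x2 y2) <= l * fro_norm (x1 - x2) + l * fro_norm (y1 - y2)) ->
  forall x y w, Xs x -> Ys y -> Ys w ->
  `|F x w - F x y - fro_dot (gy x y) (w - y)| <= l / 2 * fro_norm (w - y) ^+ 2.
Proof.
move=> Ycvx hg hL x y w Xx Yy Yw.
set e := w - y.
pose phi := fun s : R => F (x + s *: 0) (y + s *: e).
pose phi' := fun t : R => fro_dot (gx (x + t *: 0) (y + t *: e)) 0 +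
                          fro_dot (gy (x + t *: 0) (y + t *: e)) e.
have Yt : forall t, 0 <= t <= 1 -> Ys (y + t *: e) by move=> t ht; exact: Ycvx.
have := @taylor1 R phi phi' 1 (l * fro_norm e ^+ 2) ler01.
move=> /(_ _)/wrap[].
  by move=> t ht; apply: DL; apply: hg; [rewrite scaler0 addr0|exact: Yt].
move=> /(_ _)/wrap[].
  move=> t ht; rewrite /phi' !fro_dot0r !add0r !scaler0 !addr0 scale0r addr0.
  rewrite -fro_dotBl; apply: le_trans (fro_CS _ _) _.
  apply: le_trans (lmr (fro_norm_ge0 e) (hL _ _ _ _ Xx (Yt t ht) Xx Yy)) _.
  case/andP: ht => t0 t1.
  rewrite subrr fro_norm0 mulr0 add0r (addrC y) addrK fro_normZ ger0_norm //.
  by rewrite le_eqVlt; apply/orP; left; apply/eqP; ring.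
rewrite /phi /phi' !scaler0 !addr0 scale0r addr0 scale1r fro_dot0r add0r mul1r.
rewrite /e (addrC y) subrK expr1n mulr1.
by rewrite mulrAC.
Qed.

Lemma SClem (R : realType) m n k (F : 'M[R]_(m, n) -> 'rV[R]_k -> R)
  (gx : 'M[R]_(m, n) -> 'rV[R]_k -> 'M[R]_(m, n)) (gy : 'M[R]_(m, n) -> 'rV[R]_k -> 'rV[R]_k)
  (Xs : set 'M[R]_(m, n)) (Ys : set 'rV[R]_k) (l p : R) (z : 'M[R]_(m, n)) :
  (forall x1 x2 t, Xs x1 -> Xs x2 -> 0 <= t <= 1 -> Xs (x1 + t *: (x2 - x1))) ->
  (forall x y, Xs x -> Ys y -> is_grad F (gx x y) (gy x y) x y) ->
  (forall x1 y1 x2 y2, Xs x1 -> Ys y1 -> Xs x2 -> Ys y2 ->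
     fro_norm (gx x1 y1 - gx x2 y2) <= l * fro_norm (x1 - x2) + l * fro_norm (y1 - y2)) ->
  forall xs ys, Xs xs -> Ys ys ->
  (forall x, Xs x -> F xs ys + p / 2 * fro_norm (xs - z) ^+ 2 <= F x ys + p / 2 * fro_norm (x - z) ^+ 2) ->
  forall x, Xs x ->
  F xs ys + p / 2 * fro_norm (xs - z) ^+ 2 + (p - l) / 2 * fro_norm (x - xs) ^+ 2
    <= F x ys + p / 2 * fro_norm (x - z) ^+ 2.
Proof.
move=> Xcvx hg hL xs ys Xxs Yys Hmin x Xx.
set d := x - xs.
pose phi := fun s : R => F (xs + s *: d) (ys + s *: 0).
pose phi' := fun t : R => fro_dot (gx (xs + t *: d) (ys + t *: 0)) d +
                          fro_dot (gy (xs + t *: d) (ys + t *: 0)) 0.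
have Xt : forall t, 0 <= t <= 1 -> Xs (xs + t *: d) by move=> t ht; exact: Xcvx.
have TT : forall T, 0 <= T <= 1 ->
    `|phi T - phi 0 - T * phi' 0| <= l * fro_norm d ^+ 2 * T ^+ 2 / 2.
  move=> T /andP[T0 T1].
  have tT : forall t, 0 <= t <= T -> 0 <= t <= 1.
    by move=> t /andP[t0 tT]; rewrite t0 /=; apply: le_trans T1.
  apply: taylor1 => //.
    by move=> t ht; apply: DL; apply: hg; [exact: Xt (tT _ ht)|rewrite scaler0 addr0].
  move=> t ht; rewrite /phi' !fro_dot0r !addr0 !scaler0 !addr0 scale0r addr0.
  rewrite -fro_dotBl; apply: le_trans (fro_CS _ _) _.
  apply: le_trans (lmr (fro_norm_ge0 d) (hL _ _ _ _ (Xt t (tT _ ht)) Yys Xxs Yys)) _.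
  case/andP: ht => t0 t1.
  rewrite subrr fro_norm0 mulr0 addr0 (addrC xs) addrK fro_normZ ger0_norm //.
  by rewrite le_eqVlt; apply/orP; left; apply/eqP; ring.
set a := xs - z.
have qE : forall T, fro_norm (xs + T *: d - z) ^+ 2 =
    fro_norm a ^+ 2 + 2 * (T * fro_dot a d) + T ^+ 2 * fro_norm d ^+ 2.
  move=> T; rewrite (_ : xs + T *: d - z = a + T *: d); last by rewrite /a addrAC.
  by rewrite fro_norm_sq_expand fro_dotZr fro_normZ exprMn real_normK ?num_real.
have phiE : forall T, phi T = F (xs + T *: d) ys by move=> T; rewrite /phi scaler0 addr0.
have phi0 : phi 0 = F xs ys by rewrite phiE scale0r addr0.
have phi'0 : phi' 0 = fro_dot (gx xs ys) d.
  by rewrite /phi' !scale0r !addr0 fro_dot0r addr0.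
set al := phi' 0 + p * fro_dot a d.
have al0 : 0 <= al.
  apply: (@pos_lim R al (l * fro_norm d ^+ 2 / 2 + p / 2 * fro_norm d ^+ 2)).
  move=> T /andP[T0 T1].
  have hT : 0 <= T <= 1 by rewrite ltW.
  have := TT T hT; rewrite ler_norml => /andP[_ h1].
  have := Hmin _ (Xt T hT); rewrite -phiE -phi0 qE -/a.
  have : l * fro_norm d ^+ 2 * T ^+ 2 / 2 = T ^+ 2 * (l * fro_norm d ^+ 2 / 2) by ring.
  have : p / 2 * (fro_norm a ^+ 2 + 2 * (T * fro_dot a d) + T ^+ 2 * fro_norm d ^+ 2)
     = p / 2 * fro_norm a ^+ 2 + T * (p * fro_dot a d) + T ^+ 2 * (p / 2 * fro_norm d ^+ 2).
    by field.
  rewrite /al; rewrite /a in h1 *.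
  have : T * (phi' 0 + p * fro_dot (xs - z) d) = T * phi' 0 + T * (p * fro_dot (xs - z) d) by ring.
  have : T ^+ 2 * (l * fro_norm d ^+ 2 / 2 + p / 2 * fro_norm d ^+ 2) =
    T ^+ 2 * (l * fro_norm d ^+ 2 / 2) + T ^+ 2 * (p / 2 * fro_norm d ^+ 2) by ring.
  lra.
have h01 : 0 <= (1:R) <= 1 by apply/andP; split; [exact: ler01|exact: lexx].
have := TT 1 h01; rewrite ler_norml => /andP[h1 _].
rewrite phiE phi0 scale1r /d (addrC xs) subrK in h1.
have := qE 1; rewrite scale1r /d (addrC xs) subrK -/d => q1.
rewrite q1 /a.
rewrite /al /a in al0.
have : p / 2 * (fro_norm (xs - z) ^+ 2 + 2 * (1 * fro_dot (xs - z) d) + 1 ^+ 2 * fro_norm d ^+ 2)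
  = p / 2 * fro_norm (xs - z) ^+ 2 + p * fro_dot (xs - z) d + p / 2 * fro_norm d ^+ 2 by field.
have : (p - l) / 2 * fro_norm d ^+ 2 = p / 2 * fro_norm d ^+ 2 - l * fro_norm d ^+ 2 / 2 by field.
rewrite expr1n mulr1 mul1r in h1.
lra.
Qed.

Lemma Cont (R : realType) m n k (F : 'M[R]_(m, n) -> 'rV[R]_k -> R)
  (gx : 'M[R]_(m, n)) (gy : 'rV[R]_k) x y (p : R) (z : 'M[R]_(m, n)) :
  is_grad F gx gy x y ->
  forall e, 0 < e -> exists2 del, 0 < del & forall u v, fro_norm u + fro_norm v < del ->
   `|(F (x + u) (y + v) + p / 2 * fro_norm (x + u - z) ^+ 2) -
     (F x y + p / 2 * fro_norm (x - z) ^+ 2)| < e.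
Proof.
move=> hg e e0.
have [d1 d10 H1] := hg 1 ltr01.
set G := fro_norm gx + fro_norm gy + 1 + `|p| * (fro_norm (x - z) + 1).
have G0 : 0 <= G.
  rewrite /G; have := fro_norm_ge0 gx; have := fro_norm_ge0 gy.
  have : 0 <= `|p| * (fro_norm (x - z) + 1) by rewrite mulr_ge0 // addr_ge0 // fro_norm_ge0.
  lra.
exists (Num.min d1 (Num.min 1 (e / (G + 1)))).
  by rewrite !lt_min d10 ltr01 divr_gt0 //; lra.
move=> u v; rewrite !lt_min => /andP[hd1 /andP[h1 hG]].
set s := fro_norm u + fro_norm v.
have u0 := fro_norm_ge0 u; have v0 := fro_norm_ge0 v.
have := H1 _ _ hd1; rewrite mul1r -/s ler_norml => /andP[r1 r2].
have cu := fro_CS gx u; have cv := fro_CS gy v.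
have cu' : fro_norm gx * fro_norm u <= fro_norm gx * s by apply: lml; [exact: fro_norm_ge0|rewrite /s; lra].
have cv' : fro_norm gy * fro_norm v <= fro_norm gy * s by apply: lml; [exact: fro_norm_ge0|rewrite /s; lra].
have qE : fro_norm (x + u - z) ^+ 2 = fro_norm (x - z) ^+ 2 + 2 * fro_dot (x - z) u + fro_norm u ^+ 2.
  by rewrite addrAC [in LHS]fro_norm_sq_expand.
have cq := fro_CS (x - z) u.
have hu2 : fro_norm u ^+ 2 <= fro_norm u by rewrite expr2 ler_piMl //; rewrite /s in h1; lra.
have hD : `|fro_dot (x - z) u| <= fro_norm (x - z) * s.
  by apply: le_trans cq _; apply: lml; [exact: fro_norm_ge0|rewrite /s; lra].
have hZ : `|2 * fro_dot (x - z) u + fro_norm u ^+ 2| <= 2 * (fro_norm (x - z) * s) + s.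
  apply: le_trans (ler_normD _ _) _.
  rewrite normrM (ger0_norm (sqr_ge0 _)) (@ger0_norm _ 2) //.
  rewrite /s in hD *; lra.
have s0 : 0 <= s by rewrite /s; lra.
have hq : `|p / 2 * (2 * fro_dot (x - z) u + fro_norm u ^+ 2)| <= `|p| * (fro_norm (x - z) + 1) * s.
  rewrite normrM.
  have -> : `|p / 2| = `|p| / 2 by rewrite normrM (@ger0_norm _ 2^-1).
  have p2 : 0 <= `|p| / 2 by rewrite divr_ge0.
  apply: le_trans (lml p2 hZ) _.
  have : `|p| / 2 * (2 * (fro_norm (x - z) * s) + s) = `|p| * (fro_norm (x - z) * s) + `|p| * s / 2 by field.
  have : `|p| * (fro_norm (x - z) + 1) * s = `|p| * (fro_norm (x - z) * s) + `|p| * s by ring.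
  have : 0 <= `|p| * s by rewrite mulr_ge0.
  lra.
move: cu cv hq; rewrite !ler_norml => /andP[cu1 cu2] /andP[cv1 cv2] /andP[hq1 hq2].

have hGs : G * s < e.
  move: hG; rewrite ltr_pdivlMr ?(ltr_wpDl G0 ltr01) // -/s.
  have : s * (G + 1) = G * s + s by ring.
  lra.
rewrite qE ltr_norml; apply/andP; split.
  have E : p / 2 * (fro_norm (x - z) ^+ 2 + 2 * fro_dot (x - z) u + fro_norm u ^+ 2) =
    p / 2 * fro_norm (x - z) ^+ 2 + p / 2 * (2 * fro_dot (x - z) u + fro_norm u ^+ 2) by ring.
  rewrite E; rewrite /G in hGs.
  have : G * s = fro_norm gx * s + fro_norm gy * s + s + `|p| * (fro_norm (x - z) + 1) * s.
    by rewrite /G; ring.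
  rewrite /G; lra.
have E : p / 2 * (fro_norm (x - z) ^+ 2 + 2 * fro_dot (x - z) u + fro_norm u ^+ 2) =
  p / 2 * fro_norm (x - z) ^+ 2 + p / 2 * (2 * fro_dot (x - z) u + fro_norm u ^+ 2) by ring.
rewrite E; rewrite /G in hGs.
have : G * s = fro_norm gx * s + fro_norm gy * s + s + `|p| * (fro_norm (x - z) + 1) * s.
  by rewrite /G; ring.
rewrite /G; lra.
Qed.
Lemma addBK' (R : realType) m n (x w : 'M[R]_(m, n)) : x + (w - x) = w.
Proof. by rewrite addrC subrK. Qed.

Import Defs.
Unset Implicit Arguments.

Theorem lemma7 (R : realType) (d1 r d2 : nat)
  (C rho p l mu zeta Lxx Lxy Lyx Lyy : R)
  (f : 'M[R]_(d1, r) -> 'rV[R]_d2 -> R)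
  (gfx : 'M[R]_(d1, r) -> 'rV[R]_d2 -> 'M[R]_(d1, r))
  (gfy : 'M[R]_(d1, r) -> 'rV[R]_d2 -> 'rV[R]_d2)
  (gtx : 'M[R]_(d1, r) -> 'rV[R]_d2 -> 'M[R]_(d1, r))
  (gty : 'M[R]_(d1, r) -> 'rV[R]_d2 -> 'rV[R]_d2)
  (h : 'rV[R]_d2 -> \bar R) :
  (* C > 1/2 + sup_{x in M} ||x|| *)
  1 / 2 < C ->
  (forall x : 'M[R]_(d1, r), x^T *m x = 1%:M -> 1 / 2 + fro_norm x < C) ->
  (* (A1) *)
  proper_fun h -> lsc h -> weakly_convex zeta h ->
  closed_set (dom h) -> locally_lipschitz_on h (dom h) -> bounded_set (dom h) ->
  (* (A2): f differentiable on an open set containing Xbar x Y, with gradients gfx, gfy *)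
  (exists2 U : set ('M[R]_(d1, r) * 'rV[R]_d2), open_pair U &
     (forall x y, Xbar C x -> dom h y -> U (x, y)) /\
     (forall x y, U (x, y) -> is_grad f (gfx x y) (gfy x y) x y)) ->
  (forall x1 y1 x2 y2, Xbar C x1 -> dom h y1 -> Xbar C x2 -> dom h y2 ->
     fro_norm (gfx x1 y1 - gfx x2 y2)
       <= Lxx * fro_norm (x1 - x2) + Lxy * fro_norm (y1 - y2)) ->
  (forall x1 y1 x2 y2, Xbar C x1 -> dom h y1 -> Xbar C x2 -> dom h y2 ->
     fro_norm (gfy x1 y1 - gfy x2 y2)
       <= Lyx * fro_norm (x1 - x2) + Lyy * fro_norm (y1 - y2)) ->
  (* (A3): PL-type condition, with dist(0, -grad_y f + dh(y)) written out as an infimum *)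
  0 < mu ->
  (forall x y, Xbar C x -> dom h y ->
     forall v, frechet_subdiff h y v ->
       forall w, ((f x w)%:E - h w - ((f x y)%:E - h y)
                  <= (fro_norm (v - gfy x y) ^+ 2 / (2 * mu))%:E)%E) ->
  (* rho > 0; gtx, gty are the gradients of ftilde on X x Y; l a blockwise
     Lipschitz constant of them on X x Y; p > l *)
  0 < rho ->
  (forall x y, Xset C x -> dom h y ->
     is_grad (ftilde f rho) (gtx x y) (gty x y) x y) ->
  (forall x1 y1 x2 y2, Xset C x1 -> dom h y1 -> Xset C x2 -> dom h y2 ->
     fro_norm (gtx x1 y1 - gtx x2 y2)
       <= l * fro_norm (x1 - x2) + l * fro_norm (y1 - y2)) ->
  (forall x1 y1 x2 y2, Xset C x1 -> dom h y1 -> Xset C x2 -> dom h y2 ->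
     fro_norm (gty x1 y1 - gty x2 y2)
       <= l * fro_norm (x1 - x2) + l * fro_norm (y1 - y2)) ->
  l < p ->
  forall z : 'M[R]_(d1, r),
    (* all the min / max below are attained *)
    (forall x, Xset C x -> max_attained setT (fun y => fhat_r f h rho p x y z)) /\
    (forall y, min_attained (Xset C) (fun x => fhat_r f h rho p x y z)) /\
    min_attained (Xset C) (fun x => Phi f h rho p x z) /\
    max_attained setT
      (fun y => ereal_inf [set fhat_r f h rho p x y z | x in Xset C]) /\
    max_attained setT (fun y => Psi_r f h rho p C y z) /\
    (* min_x max_y fhat_r = max_y min_x fhat_r *)
    ereal_inf [set Phi f h rho p x z | x in Xset C]
      = ereal_sup [set ereal_inf [set fhat_r f h rho p x y z | x in Xset C]
                  | y in [set: 'rV[R]_d2]] /\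
    (* P(z) = min_x Phi(x;z) = max_y Psi_r(y;z) *)
    ereal_inf [set Phi f h rho p x z | x in Xset C]
      = ereal_sup [set Psi_r f h rho p C y z | y in [set: 'rV[R]_d2]].
Proof.
move=> HC _ [hnm [y1 Yy1]] hlsc hwc hcl _ [Mb HMb] [U _ [UXY Ugrad]] _ _ mu0 hPL
  rho0 hgt hLtx hLty hlp z.
have hE : forall y, dom h y -> h y = (fine (h y))%:E.
  by move=> y Yy; rewrite fineK // fin_numE hnm /= (lt_eqF Yy).
have hI : forall y, ~ dom h y -> h y = +oo%E.
  move=> y; rewrite /dom /=; have := hnm y.
  by case: (h y) => [rr| |] //= _ /negP; rewrite ?ltry ?ltNyr.
have FE : forall x y, dom h y ->
    fhat_r f h rho p x y z = (fhat f rho p x y z - fine (h y))%:E.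
  by move=> x y Yy; rewrite /fhat_r hE // EFinB.
have FI : forall x y, ~ dom h y -> fhat_r f h rho p x y z = -oo%E.
  by move=> x y Yy; rewrite /fhat_r hI.
have X0 : Xset C (0 : 'M[R]_(d1, r)) by rewrite /Xset /= fro_norm0; lra.
have Xcvx : forall (x1 x2 : 'M[R]_(d1, r)) (t : R), Xset C x1 -> Xset C x2 -> 0 <= t <= 1 ->
    Xset C (x1 + t *: (x2 - x1)).
  by move=> x1 x2 t; rewrite /Xset /=; exact: cvx_ball.
have Ycvx : forall (y1 y2 : 'rV[R]_d2) (t : R), dom h y1 -> dom h y2 -> 0 <= t <= 1 ->
    dom h (y1 + t *: (y2 - y1)).
  move=> ya yb t Ya Yb ht.
  have := hwc yb ya t ht; rewrite cvx_pt (hE _ Ya) (hE _ Yb).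
  rewrite -!EFinD.
  by rewrite /dom /=; case: (h _) => [rr| |] //= _; rewrite ltry.
have Xcl : forall y : 'M[R]_(d1, r),
    (forall eps, 0 < eps -> exists2 w, Xset C w & fro_norm (w - y) < eps) -> Xset C y.
  move=> y H; rewrite /Xset /=; apply/ler_addgt0Pr => e e0.
  have [w Xw hw] := H e e0; move: Xw; rewrite /Xset /= => Xw.
  have := fro_normDB y w; rewrite fro_normB; lra.
have ContH : forall (x : 'M[R]_(d1, r)) (y : 'rV[R]_d2), Xset C x -> dom h y -> forall e, 0 < e -> exists2 del, 0 < del &
    forall w w', fro_norm (w - x) + fro_norm (w' - y) < del ->
    `|fhat f rho p w w' z - fhat f rho p x y z| < e.
  move=> x y Xx Yy e e0.
  have [del del0 Hd] := Cont p z (hgt x y Xx Yy) e0.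
  by exists del => // w w' hw; have := Hd _ _ hw; rewrite !addBK'.
have xmin : forall y : 'rV[R]_d2, exists x : 'M[R]_(d1, r), Xset C x /\
    (dom h y -> forall x' : 'M[R]_(d1, r), Xset C x' -> fhat f rho p x y z <= fhat f rho p x' y z).
  move=> y; case: (pselect (dom h y)) => Yy; last by exists 0.
  have lscx : forall x : 'M[R]_(d1, r), Xset C x -> forall e, 0 < e -> exists2 del, 0 < del &
      forall w : 'M[R]_(d1, r), Xset C w -> fro_norm (w - x) < del ->
      fhat f rho p x y z - e < fhat f rho p w y z.
    move=> x Xx e e0; have [del del0 Hd] := ContH x y Xx Yy e e0.
    exists del => // w Xw hw; have := Hd w y; rewrite subrr fro_norm0 addr0 => /(_ hw).
    rewrite ltr_norml => /andP[h1 _]; lra.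
  have [x0 Xx0 H] := EVT_M_min (fun x (hx : Xset C x) => hx) Xcl (@ex_intro _ (Xset C) 0 X0) lscx.
  by exists x0; split => // _.
have [xm Hxm] := choice xmin.
have ymax : forall x : 'M[R]_(d1, r), Xset C x -> exists2 y0 : 'rV[R]_d2, dom h y0 & forall y, dom h y ->
    fhat f rho p x y z - fine (h y) <= fhat f rho p x y0 z - fine (h y0).
  move=> x Xx.
  have uscy : forall y : 'rV[R]_d2, dom h y -> forall e, 0 < e -> exists2 del, 0 < del &
      forall w, dom h w -> fro_norm (w - y) < del ->
      fhat f rho p x w z - fine (h w) < fhat f rho p x y z - fine (h y) + e.
    move=> y Yy e e0.
    have e2 : 0 < e / 2 by rewrite divr_gt0.
    have [d1' d10 Hd1] := ContH x y Xx Yy _ e2.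
    have ha : ((fine (h y) - e / 2)%:E < h y)%E by rewrite (hE _ Yy) lte_fin; lra.
    have [d2' d20 Hd2] := hlsc y _ ha.
    exists (Num.min d1' d2'); first by rewrite lt_min d10 d20.
    move=> w Yw; rewrite lt_min => /andP[hw1 hw2].
    have := Hd2 w hw2; rewrite (hE _ Yw) lte_fin => h2.
    have := Hd1 x w; rewrite subrr fro_norm0 add0r => /(_ hw1).
    rewrite ltr_norml => /andP[_ h1]; lra.
  have [y0 Yy0 H] := EVT_M_max HMb hcl (@ex_intro _ (dom h) y1 Yy1) uscy.
  by exists y0.
have gval : forall y : 'rV[R]_d2, ereal_inf [set fhat_r f h rho p x y z | x in Xset C]
    = fhat_r f h rho p (xm y) y z.
  move=> y; symmetry.
  apply: (@inf_att R _ (Xset C) (fun x => fhat_r f h rho p x y z) (xm y)); first by case: (Hxm y).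
  move=> x Xx; case: (pselect (dom h y)) => Yy; last by rewrite !FI.
  by rewrite !FE // lee_fin lerB // (Hxm y).2.
have psival : forall y : 'rV[R]_d2, Psi_r f h rho p C y z = fhat_r f h rho p (xm y) y z.
  move=> y; rewrite /Psi_r; case: (pselect (dom h y)) => Yy; last first.
    by rewrite hI // FI // addeNy.
  have -> : ereal_inf [set (fhat f rho p x y z)%:E | x in Xset C]
      = (fhat f rho p (xm y) y z)%:E.
    symmetry.
    apply: (@inf_att R _ (Xset C) (fun x => (fhat f rho p x y z)%:E) (xm y)); first by case: (Hxm y).
    by move=> x Xx; rewrite lee_fin (Hxm y).2.
  by rewrite (hE _ Yy) FE // EFinB.
have [ys Yys Hys] : exists2 ys : 'rV[R]_d2, dom h ys & forall y, dom h y ->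
    fhat f rho p (xm y) y z - fine (h y) <= fhat f rho p (xm ys) ys z - fine (h ys).
  have uscg : forall y : 'rV[R]_d2, dom h y -> forall e, 0 < e -> exists2 del, 0 < del &
      forall w, dom h w -> fro_norm (w - y) < del ->
      fhat f rho p (xm w) w z - fine (h w) < fhat f rho p (xm y) y z - fine (h y) + e.
    move=> y Yy e e0.
    have e2 : 0 < e / 2 by rewrite divr_gt0.
    have [d1' d10 Hd1] := ContH (xm y) y (Hxm y).1 Yy _ e2.
    have ha : ((fine (h y) - e / 2)%:E < h y)%E by rewrite (hE _ Yy) lte_fin; lra.
    have [d2' d20 Hd2] := hlsc y _ ha.
    exists (Num.min d1' d2'); first by rewrite lt_min d10 d20.
    move=> w Yw; rewrite lt_min => /andP[hw1 hw2].
    have := Hd2 w hw2; rewrite (hE _ Yw) lte_fin => h2.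
    have := Hd1 (xm y) w; rewrite subrr fro_norm0 add0r => /(_ hw1).
    have := (Hxm w).2 Yw (xm y) (Hxm y).1.
    rewrite ltr_norml => h3 /andP[_ h1]; lra.
  have [y0 Yy0 H] := EVT_M_max HMb hcl (@ex_intro _ (dom h) y1 Yy1) uscg.
  by exists y0.
set xs := xm ys.
have Xxs : Xset C xs := (Hxm ys).1.
have Hxs := (Hxm ys).2 Yys.
have SC := SClem (F := ftilde f rho) (p := p) (z := z) Xcvx hgt hLtx Xxs Yys
  (fun x Xx => Hxs x Xx).
have YL := Ylem Ycvx hgt hLty.
have XbA : Xbar C (Amap xs) by exists xs.
have hsub : frechet_subdiff h ys (gty xs ys).
  split; first by rewrite (hE _ Yys).
  move=> eps eps0.
  set La := `|l|.
  have La0 : 0 <= La := normr_ge0 l.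
  have lLa : l <= La := ler_norm l.
  set c := (p - l) / 2.
  have c0 : 0 < c by rewrite /c; lra.
  set Kb := 2 * La / c + 1.
  have Kb0 : 0 <= Kb.
    rewrite /Kb; have : 0 <= 2 * La / c by apply: divr_ge0; [apply: mulr_ge0 | exact: ltW].
    lra.
  set Q := La * Kb + La / 2.
  have Q0 : 0 <= Q by rewrite /Q; have := mulr_ge0 La0 Kb0; lra.
  exists (eps / (Q + 1)); first by rewrite divr_gt0 //; lra.
  move=> w hw.
  case: (pselect (dom h w)) => Yw; last by rewrite (hI _ Yw) leey.
  rewrite (hE _ Yw) lee_fin.
  set e := w - ys; set b := fro_norm e; set xw := xm w.
  have Xxw : Xset C xw := (Hxm w).1.
  set a := fro_norm (xw - xs).
  have a0 : 0 <= a := fro_norm_ge0 _.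
  have b0 : 0 <= b := fro_norm_ge0 _.
  have T1 := YL xw ys w Xxw Yys Yw.
  have T2 := YL xs ys w Xxs Yys Yw.
  have Lip := hLty xw ys xs ys Xxw Yys Xxs Yys.
  rewrite subrr fro_norm0 mulr0 addr0 -/a in Lip.
  have Dab : `|fro_dot (gty xw ys) e - fro_dot (gty xs ys) e| <= La * a * b.
    rewrite -fro_dotBl; apply: le_trans (fro_CS _ _) _.
    rewrite -/b; apply: (lmr b0); apply: le_trans Lip _; exact: lmr a0 lLa.
  have Min := (Hxm w).2 Yw xs Xxs.
  have SCa := SC xw Xxw; rewrite -/a -/c in SCa.
  have Mx := Hys w Yw.
  rewrite /fhat -/xw -/xs in Min Mx.
  rewrite -/e -/b in T1 T2.
  have lb : l / 2 * b ^+ 2 <= La * b ^+ 2 / 2.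
    have := lmr (sqr_ge0 b) lLa; lra.
  move: T1 T2 Dab; rewrite !ler_norml => /andP[t11 t12] /andP[t21 t22] /andP[dd1 dd2].
  have ca : c * a ^+ 2 <= La * a * b + La * b ^+ 2 by lra.
  have ab := ab_bound c0 La0 a0 b0 ca; rewrite -/Kb in ab.
  have hab : La * a * b <= La * Kb * b ^+ 2.
    have := lmr b0 (lml La0 ab).
    by have -> : La * (Kb * b) * b = La * Kb * b ^+ 2 by ring.
  have ca0 : 0 <= c * a ^+ 2 by rewrite mulr_ge0 ?sqr_ge0 // ltW.
  have hb : Q * b ^+ 2 <= eps * b.
    move: hw; rewrite -/e -/b ltr_pdivlMr; last lra.
    move=> hw; have := lmr b0 (ltW hw).
    have : Q * b ^+ 2 <= b * (Q + 1) * b.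
      have -> : b * (Q + 1) * b = Q * b ^+ 2 + b ^+ 2 by ring.
      by rewrite lerDl sqr_ge0.
    lra.
  have : Q * b ^+ 2 = La * Kb * b ^+ 2 + La * b ^+ 2 / 2 by rewrite /Q; ring.
  lra.
have hgeq : gty xs ys = gfy (Amap xs) ys.
  have hgf := Ugrad _ _ (UXY _ _ XbA Yys).
  apply/eqP; rewrite -subr_eq0; apply/eqP; apply: grad_unique => eps eps0.
  have e2 : 0 < eps / 2 by rewrite divr_gt0.
  have [d1' d10 H1] := hgt xs ys Xxs Yys (eps / 2) e2.
  have [d2' d20 H2] := hgf (eps / 2) e2.
  exists (Num.min d1' d2'); first by rewrite lt_min d10 d20.
  move=> v; rewrite lt_min => /andP[hv1 hv2].
  have := H1 0 v; rewrite fro_norm0 add0r => /(_ hv1).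
  have := H2 0 v; rewrite fro_norm0 add0r => /(_ hv2).
  rewrite !addr0 !fro_dot0r !subr0 /ftilde fro_dotBl.
  rewrite !ler_norml => /andP[a1 a2] /andP[b1 b2].
  apply/andP; split; lra.
have sad2 : forall w, (fhat_r f h rho p xs w z <= fhat_r f h rho p xs ys z)%E.
  move=> w; case: (pselect (dom h w)) => Yw; last by rewrite (FI _ _ Yw) leNye.
  have := hPL (Amap xs) ys XbA Yys (gty xs ys) hsub w.
  rewrite -hgeq subrr fro_norm0 expr2 !mul0r (hE _ Yw) (hE _ Yys) -!EFinB lee_fin => Hp.
  rewrite !FE // lee_fin /fhat /ftilde; lra.
have sad1 : forall x, Xset C x -> (fhat_r f h rho p xs ys z <= fhat_r f h rho p x ys z)%E.
  by move=> x Xx; rewrite !FE // lee_fin lerB // Hxs.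
have Phival : Phi f h rho p xs z = fhat_r f h rho p xs ys z.
  rewrite /Phi; symmetry.
  by apply: (@sup_att R _ setT (fun y => fhat_r f h rho p xs y z) ys) => // y _; exact: sad2.
have infPhi : Phi f h rho p xs z = ereal_inf [set Phi f h rho p x z | x in Xset C].
  apply: (@inf_att R _ (Xset C) (fun x => Phi f h rho p x z) xs) => // x Xx.
  rewrite Phival; apply: le_trans (sad1 x Xx) _.
  by apply: ereal_sup_ubound; exists ys.
have supg : fhat_r f h rho p xs ys z =
    ereal_sup [set ereal_inf [set fhat_r f h rho p x y z | x in Xset C] | y in [set: 'rV[R]_d2]].
  rewrite -gval.
  apply: (@sup_att R _ setT (fun y => ereal_inf [set fhat_r f h rho p x y z | x in Xset C]) ys) => // y _.
  have e1 : (ereal_inf [set fhat_r f h rho p x y z | x in Xset C] <= fhat_r f h rho p xs y z)%E.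
    by apply: ereal_inf_lbound; exists xs.
  by rewrite (gval ys); exact: le_trans e1 (sad2 y).
have supP : fhat_r f h rho p xs ys z =
    ereal_sup [set Psi_r f h rho p C y z | y in [set: 'rV[R]_d2]].
  rewrite -[LHS]psival.
  apply: (@sup_att R _ setT (fun y => Psi_r f h rho p C y z) ys) => // y _.
  have e1 : (ereal_inf [set fhat_r f h rho p x y z | x in Xset C] <= fhat_r f h rho p xs y z)%E.
    by apply: ereal_inf_lbound; exists xs.
  by rewrite (psival ys) (psival y) -gval; exact: le_trans e1 (sad2 y).
split.
  move=> x Xx; have [y0 Yy0 H] := ymax x Xx; exists y0 => //.
  apply: (@sup_att R _ setT (fun y => fhat_r f h rho p x y z) y0) => // y _.
  case: (pselect (dom h y)) => Yy; last by rewrite (FI _ _ Yy) leNye.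
  by rewrite !FE // lee_fin; exact: H.
split.
  move=> y; exists (xm y); first by case: (Hxm y).
  by rewrite gval.
split; first by exists xs.
split; first by exists ys => //; rewrite -supg gval.
split; first by exists ys => //; rewrite -supP psival.
split; first by rewrite -infPhi Phival supg.
by rewrite -infPhi Phival supP.
Qed.
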